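(* Let $G$ be the digraph with vertex set $\{v_1,\dots,v_{17}\}$ and the $27$ arcs $(v_1,v_2)$, $(v_2,v_5)$, $(v_2,v_3)$, $(v_3,v_5)$, $(v_3,v_4)$, $(v_4,v_5)$, $(v_5,v_9)$, $(v_5,v_7)$, $(v_5,v_6)$, $(v_6,v_7)$, $(v_7,v_9)$, $(v_7,v_8)$, $(v_8,v_9)$, $(v_9,v_{16})$, $(v_9,v_{13})$, $(v_9,v_{11})$, $(v_9,v_{10})$, $(v_{10},v_{11})$, $(v_{11},v_{13})$, $(v_{11},v_{12})$, $(v_{12},v_{13})$, $(v_{13},v_{16})$, $(v_{13},v_{15})$, $(v_{13},v_{14})$, $(v_{14},v_{15})$, $(v_{15},v_{16})$, $(v_{16},v_{17})$. Then $G$ is an esp-digraph and $\chi'_o(G)=7$. In particular the bound $\chi'_o(G)\le 7$ for esp-digraphs is best possible.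
   Context: An oriented $r$-arc-coloring of a digraph $G=(V,E)$ is a map $c:E\to\{1,\dots,r\}$ such that (i) $c((u,v))\ne c((v,w))$ for every two arcs $(u,v),(v,w)\in E$, and (ii) $c((u,v))\ne c((y,z))$ for all arcs $(u,v),(v,w),(x,y),(y,z)\in E$ with $c((v,w))=c((x,y))$. The oriented chromatic index $\chi'_o(G)$ is the smallest $r$ for which such a coloring exists. Edge series-parallel (multi)digraphs (esp-digraphs) are defined recursively, each with a distinguished source and sink: (i) a digraph with two distinct vertices $u,v$ and the single arc $(u,v)$ is an esp-digraph with source $u$ and sink $v$; (ii) if $G_1,G_2$ are vertex-disjoint esp-digraphs, then the parallel composition $G_1\cup G_2$ (identify the source of $G_1$ with the source of $G_2$ and the sink of $G_1$ with the sink of $G_2$; arcs are united, possibly creating parallel arcs) is an esp-digraph with these identified source and sink, and the series composition $G_1\times G_2$ (identify the sink of $G_1$ with the source of $G_2$) is an esp-digraph with source the source of $G_1$ and sink the sink of $G_2$. *)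

(* Defs.v *)
From mathcomp Require Import all_boot.
Set Implicit Arguments. Unset Strict Implicit. Unset Printing Implicit Defensive.

(* A (multi)digraph on the vertex set {0,...,n-1} (vertices are nats) is given
   by its list of arcs; arcs are identified by their position in the list, so
   parallel arcs are allowed. *)
Definition arcs_t := seq (nat * nat).

Definition oriented_arc_coloring (A : arcs_t) (r : nat)
    (c : 'I_(size A) -> 'I_r) : Prop :=
  (forall a b : 'I_(size A),
      (nth (0,0) A a).2 = (nth (0,0) A b).1 -> c a <> c b) /\
  (forall a b d e : 'I_(size A),
      (nth (0,0) A a).2 = (nth (0,0) A b).1 ->
      (nth (0,0) A d).2 = (nth (0,0) A e).1 ->
      c b = c d -> c a <> c e).

Definition has_oriented_coloring (A : arcs_t) (r : nat) : Prop :=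
  exists c : 'I_(size A) -> 'I_r, oriented_arc_coloring c.

Definition oriented_chromatic_index_is (A : arcs_t) (k : nat) : Prop :=
  has_oriented_coloring A k /\ forall r, r < k -> ~ has_oriented_coloring A r.

Inductive esp_term : Type :=
| EArc : esp_term
| EPar : esp_term -> esp_term -> esp_term
| ESer : esp_term -> esp_term -> esp_term.

(* Realization: (number of vertices n, source, sink, arcs), vertices 0..n-1. *)
Record esp_graph := EspGraph { eg_n : nat; eg_s : nat; eg_t : nat; eg_arcs : arcs_t }.

Definition map_arcs (f : nat -> nat) (A : arcs_t) : arcs_t :=
  [seq (f a.1, f a.2) | a <- A].

Fixpoint realize (e : esp_term) : esp_graph :=
  match e with
  | EArc => EspGraph 2 0 1 [:: (0, 1)]
  | ESer e1 e2 =>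
      let g1 := realize e1 in let g2 := realize e2 in
      (* vertices of g2 renamed; source of g2 identified with sink of g1 *)
      let f v := if v == eg_s g2 then eg_t g1
                 else if v < eg_s g2 then eg_n g1 + v else eg_n g1 + v - 1 in
      EspGraph (eg_n g1 + eg_n g2 - 1) (eg_s g1) (f (eg_t g2))
               (eg_arcs g1 ++ map_arcs f (eg_arcs g2))
  | EPar e1 e2 =>
      let g1 := realize e1 in let g2 := realize e2 in
      (* sources identified, sinks identified, other vertices of g2 renamed *)
      let f v := if v == eg_s g2 then eg_s g1
                 else if v == eg_t g2 then eg_t g1
                 else eg_n g1 + v - (eg_s g2 < v) - (eg_t g2 < v) in
      EspGraph (eg_n g1 + eg_n g2 - 2) (eg_s g1) (eg_t g1)
               (eg_arcs g1 ++ map_arcs f (eg_arcs g2))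
  end.

(* The digraph on vertices {0..n-1} with arc list A is an esp-digraph: it is
   isomorphic (as a multidigraph) to the realization of some esp expression. *)
Definition is_esp (n : nat) (A : arcs_t) : Prop :=
  exists (e : esp_term) (phi : nat -> nat),
    eg_n (realize e) = n /\
    (forall v, v < n -> phi v < n) /\
    {in [pred v | v < n] &, injective phi} /\
    perm_eq (map_arcs phi (eg_arcs (realize e))) A.

(* The digraph of the statement; vertex v_i is represented by i-1. *)
Definition G_arcs_1based : arcs_t :=
  [:: (1,2); (2,5); (2,3); (3,5); (3,4); (4,5); (5,9); (5,7); (5,6); (6,7);
      (7,9); (7,8); (8,9); (9,16); (9,13); (9,11); (9,10); (10,11); (11,13);
      (11,12); (12,13); (13,16); (13,15); (13,14); (14,15); (15,16); (16,17)].

Definition G_arcs : arcs_t := map_arcs (fun v => v.-1) G_arcs_1based.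

(* Main.v *)
Require Import Defs.
From mathcomp Require Import all_boot.

Definition hdA (A : arcs_t) i := (nth (0,0) A i).2.
Definition tlA (A : arcs_t) i := (nth (0,0) A i).1.

Definition pairs (A : arcs_t) (s : seq nat) : seq (nat * nat) :=
  flatten [seq [seq (nth 0 s i, nth 0 s j) | j <- iota 0 (size s) & hdA A i == tlA A j]
          | i <- iota 0 (size s)].

Definition okb (A : arcs_t) (s : seq nat) : bool :=
  let P := pairs A s in all (fun p => (p.1 != p.2) && ((p.2, p.1) \notin P)) P.

Definition maxp (s : seq nat) := foldr (fun x m => maxn x.+1 m) 0 s.

Fixpoint ext (A : arcs_t) (r k : nat) : seq (seq nat) :=
  match k with
  | 0 => [:: [::]]
  | k.+1 => flatten [seq [seq rcons s x | x <- iota 0 (maxp s).+1 & (x < r) && okb A (rcons s x)]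
                    | s <- ext A r k]
  end.


Definition valid_nat (A : arcs_t) (r : nat) (g : nat -> nat) : Prop :=
  (forall i, i < size A -> g i < r) /\
  (forall a b, a < size A -> b < size A -> hdA A a = tlA A b -> g a <> g b) /\
  (forall a b d e, a < size A -> b < size A -> d < size A -> e < size A ->
     hdA A a = tlA A b -> hdA A d = tlA A e -> g b = g d -> g a <> g e).

Lemma pairsP A s p :
  reflect (exists i j, [/\ i < size s, j < size s, hdA A i = tlA A j &
                          p = (nth 0 s i, nth 0 s j)]) (p \in pairs A s).
Proof.
apply: (iffP idP).
- case/flatten_mapP => i; rewrite mem_iota add0n => /andP[_ Hi].
  case/mapP => j; rewrite mem_filter mem_iota add0n => /andP[/eqP Hij /andP[_ Hj]] ->.
  by exists i, j.
- case=> i [j [Hi Hj Hij ->]]; apply/flatten_mapP; exists i.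
    by rewrite mem_iota add0n.
  by apply/mapP; exists j => //; rewrite mem_filter mem_iota add0n Hj Hij eqxx.
Qed.

Lemma okb_prefix A r g k : valid_nat A r g -> k <= size A -> okb A (mkseq g k).
Proof.
move=> [Hb [H1 H2]] Hk; rewrite /okb; apply/allP => p /pairsP [i [j [Hi Hj Hij ->]]].
rewrite size_mkseq in Hi Hj.
have Hi' : i < size A by apply: leq_trans Hk.
have Hj' : j < size A by apply: leq_trans Hk.
rewrite /= !nth_mkseq //; apply/andP; split.
  by apply/eqP; apply: H1.
apply/negP => /pairsP [i' [j' [Hi2 Hj2 Hij2 [E1 E2]]]].
rewrite size_mkseq in Hi2 Hj2.
rewrite !nth_mkseq // in E1 E2.
have Hi2' : i' < size A by apply: leq_trans Hk.
have Hj2' : j' < size A by apply: leq_trans Hk.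
by apply: (H2 i j i' j') => //; rewrite -?E1 -?E2.
Qed.

Lemma okb_valid A r s : size s = size A -> okb A s -> all (fun x => x < r) s ->
  valid_nat A r (nth 0 s).
Proof.
move=> Hs Hok Hr; split; [|split].
- move=> i Hi; apply: (allP Hr); apply: mem_nth; by rewrite Hs.
- move=> a b Ha Hb Hab E.
  have Hp : (nth 0 s a, nth 0 s b) \in pairs A s.
    by apply/pairsP; exists a, b; rewrite Hs.
  by move: (allP Hok _ Hp) => /= /andP[/eqP []].
- move=> a b d e Ha Hb Hd He Hab Hde E F.
  have Hp : (nth 0 s a, nth 0 s b) \in pairs A s.
    by apply/pairsP; exists a, b; rewrite Hs.
  have Hq : (nth 0 s d, nth 0 s e) \in pairs A s.
    by apply/pairsP; exists d, e; rewrite Hs.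
  move: (allP Hok _ Hp) => /= /andP[_ /negP []].
  by rewrite E F.
Qed.

Lemma valid_eqv A r g h : valid_nat A r g -> (forall i, i < size A -> h i < r) ->
  (forall a b, (h a == h b) = (g a == g b)) -> valid_nat A r h.
Proof.
move=> [_ [H1 H2]] Hb Heq; split; [by []|split].
- move=> a b Ha Hb' Hab E; apply: (H1 a b) => //; apply/eqP; rewrite -Heq; exact/eqP.
- move=> a b d e Ha Hb' Hd He Hab Hde E F; apply: (H2 a b d e) => //; apply/eqP; rewrite -Heq; exact/eqP.
Qed.

Lemma maxp_lt s i : i < size s -> nth 0 s i < maxp s.
Proof.
elim: s i => [|x s IH] [|i] //= Hi.
  by rewrite leq_max ltnSn.
by rewrite leq_max IH ?orbT.
Qed.

Definition RGS (g : nat -> nat) k := forall i, i < k -> g i <= maxp (mkseq g i).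

Lemma eq_mkseq_in (g h : nat -> nat) k : (forall i, i < k -> g i = h i) -> mkseq g k = mkseq h k.
Proof.
move=> E; rewrite /mkseq; apply/eq_in_map => i; rewrite mem_iota add0n => /andP[_ Hi]; exact: E.
Qed.

Lemma canon A r g : valid_nat A r g -> forall k, k <= size A ->
  exists g', valid_nat A r g' /\ RGS g' k.
Proof.
move=> Hg; elim=> [|k IH] Hk.
  by exists g; split.
have [g' [Hv HR]] := IH (ltnW Hk).
set m := maxp (mkseq g' k).
have Hlt : forall i, i < k -> g' i < m.
  move=> i Hi; rewrite /m; have := @maxp_lt (mkseq g' k) i.
  by rewrite size_mkseq nth_mkseq // => ->.
case: (leqP (g' k) m) => Hgk.
  exists g'; split => // i; rewrite ltnS leq_eqVlt => /orP[/eqP -> //|]; exact: HR.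
set x := g' k.
pose sw u := if u == m then x else if u == x then m else u.
have swK : involutive sw.
  move=> u; rewrite /sw.
  have Hxm : (x == m) = false by apply/negbTE; rewrite neq_ltn Hgk orbT.
  case: (eqVneq u m) => [->|Hum]; first by rewrite ?Hxm ?eqxx ?Hxm ?eqxx.
  case: (eqVneq u x) => [->|Hux]; first by rewrite ?Hxm ?eqxx ?Hxm ?eqxx.
  by rewrite (negbTE Hum) (negbTE Hux).
have swI := can_inj swK.
exists (fun i => sw (g' i)); split.
  apply: (@valid_eqv _ _ g' (fun i => sw (g' i)) Hv).
    move=> i Hi; rewrite /sw; case: eqP => _.
      by case: Hv => Hb _; apply: Hb.
    case: eqP => _; last by case: Hv => Hb _; apply: Hb.
    by apply: leq_trans Hgk _; apply: ltnW; case: Hv => Hb _; apply: Hb.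
  by move=> a b; rewrite (inj_eq swI).
have Hsame : forall i, i < k -> sw (g' i) = g' i.
  move=> i Hi; rewrite /sw; have := Hlt i Hi => Hl.
  by rewrite (ltn_eqF Hl) (ltn_eqF (ltn_trans Hl Hgk)).
move=> i; rewrite ltnS leq_eqVlt => /orP[/eqP ->|Hi].
  rewrite (@eq_mkseq_in _ g') // -/m /sw.
  by rewrite ifF ?eqxx //; apply/negbTE; rewrite /x neq_ltn Hgk orbT.
rewrite Hsame // (@eq_mkseq_in _ g'); first exact: HR.
move=> j Hj; apply: Hsame; exact: ltn_trans Hj Hi.
Qed.

Lemma in_ext A r g : valid_nat A r g -> forall k, k <= size A -> RGS g k ->
  mkseq g k \in ext A r k.
Proof.
move=> Hg; elim=> [|k IH] Hk HR; first by rewrite mem_seq1.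
rewrite mkseqS; apply/flatten_mapP; exists (mkseq g k).
  by apply: IH (ltnW Hk) _ => i Hi; apply: HR; apply: ltnW.
apply/mapP; exists (g k) => //; rewrite mem_filter mem_iota add0n /= ltnS HR //.
rewrite -mkseqS (@okb_prefix A r g k.+1 Hg Hk) andbT andbT.
by case: Hg => Hb _; apply: Hb.
Qed.

Definition Lcol := [:: 0; 1; 1; 2; 2; 0; 3; 3; 3; 4; 5; 5; 0; 6; 6; 6; 6; 1; 2; 2; 3; 4; 4; 4; 5; 0; 1].
Definition Lphi := [:: 0; 1; 4; 2; 3; 8; 6; 5; 7; 15; 12; 10; 9; 11; 14; 13; 16].
Definition eterm := (ESer (ESer (ESer (ESer EArc (EPar EArc (ESer EArc (EPar EArc (ESer EArc EArc))))) (EPar EArc (ESer (EPar EArc (ESer EArc EArc)) (EPar EArc (ESer EArc EArc))))) (EPar EArc (ESer (EPar EArc (ESer (EPar EArc (ESer EArc EArc)) (EPar EArc (ESer EArc EArc)))) (EPar EArc (ESer (EPar EArc (ESer EArc EArc)) EArc))))) EArc).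

Lemma esp_G : is_esp 17 G_arcs.
Proof.
exists eterm, (fun v => nth 0 Lphi v); split; first by vm_compute.
split.
  have H : all (fun v => nth 0 Lphi v < 17) (iota 0 17) by vm_compute.
  by move=> v Hv; apply: (allP H); rewrite mem_iota.
split; last by vm_compute.
have H : all (fun u => all (fun v => (nth 0 Lphi u == nth 0 Lphi v) ==> (u == v)) (iota 0 17))
           (iota 0 17) by vm_compute.
move=> u v; rewrite !inE => Hu Hv E.
have := allP (allP H u _) v; rewrite !mem_iota /= Hu Hv E eqxx => /(_ isT isT) /eqP; by [].
Qed.

Lemma ext_nil : ext G_arcs 6 27 = [::].
Proof. vm_compute. reflexivity. Qed.

Lemma upper : has_oriented_coloring G_arcs 7.
Proof.
have Hv : valid_nat G_arcs 7 (nth 0 Lcol).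
  by apply: okb_valid; vm_compute.
case: Hv => Hb [H1 H2].
exists (fun o => inord (nth 0 Lcol o)); split.
  move=> a b E /(congr1 (@nat_of_ord 7)); rewrite !inordK ?Hb //; exact: H1.
move=> a b d e E F G' H; have := congr1 (@nat_of_ord 7) G'; have := congr1 (@nat_of_ord 7) H.
rewrite !inordK ?Hb // => H' G''; exact: (H2 a b d e).
Qed.

Lemma lower r : r < 7 -> ~ has_oriented_coloring G_arcs r.
Proof.
move=> Hr [c [H1 H2]].
pose g i := oapp (fun o : 'I_(size G_arcs) => val (c o)) 0 (insub i).
have gE : forall i (Hi : i < size G_arcs), g i = val (c (Sub i Hi)).
  by move=> i Hi; rewrite /g insubT.
have Hv : valid_nat G_arcs 6 g.
  split; [|split].
  - move=> i Hi; rewrite (gE _ Hi); exact: leq_trans (ltn_ord _) _.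
  - move=> a b Ha Hb Hab; rewrite (gE _ Ha) (gE _ Hb) => /val_inj; apply: H1.
    by rewrite /= -/(hdA _ _) Hab.
  - move=> a b d e Ha Hb Hd He Hab Hde; rewrite (gE _ Ha) (gE _ Hb) (gE _ Hd) (gE _ He).
    move=> /val_inj E /val_inj; apply: (H2 _ _ _ _ _ _ E) => //.
have [g' [Hv' HR]] := @canon _ _ _ Hv _ (leqnn _).
by have := @in_ext _ _ _ Hv' _ (leqnn _) HR; rewrite ext_nil.
Qed.

Theorem mainTheorem7 :
  is_esp 17 G_arcs /\ oriented_chromatic_index_is G_arcs 7.
Proof.
split; first exact: esp_G.
split; first exact: upper.
exact: lower.
Qed.
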